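(* Let $G$ be an influence graph that is a directed line on nodes $\{1,\dots,n\}$ with edges $(i+1,i)$ for $i=1,\dots,n-1$, and for each $i$ let $p_i$ be the probability that node $i$ reaches node $1$ in the live-edge graph. Then for every $(x_1,\dots,x_n)\in[0,1]^n$ and every $i\in\{1,\dots,n\}$, $$F_1(0,\dots,0,x_i,\dots,x_n)-F_1(0,\dots,0,x_{i+1},\dots,x_n)=x_ip_i\big(1-F_i(0,\dots,0,x_{i+1},\dots,x_n)\big),$$ where in each argument vector the first coordinates (up to position $i-1$, resp. $i$) are $0$ and coordinate $j$ equals $x_j$ for the remaining positions.
   Context: IC model: each edge $e$ has probability $p_e\in[0,1]$; a realization (live-edge graph) $\phi$ contains each edge independently with probability $p_e$, with distribution $\mathcal{P}$. $\Gamma(S,\phi)$ is the set of nodes reachable from $S$ in $\phi$. For a node $u$ and $S\subseteq\{1,\dots,n\}$, $\sigma_u(S)=\Pr_{\Phi\sim\mathcal{P}}[u\in\Gamma(S,\Phi)]$, and $F_u(y_1,\dots,y_n)=\sum_{S\subseteq[n]}\big(\prod_{j\in S}y_j\prod_{j\notin S}(1-y_j)\big)\sigma_u(S)$, i.e. the probability that $u$ is activated when each node $j$ is independently a seed with probability $y_j$. *)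

(* Defs.v *)
From mathcomp Require Import all_boot all_order all_algebra.
Set Implicit Arguments. Unset Strict Implicit. Unset Printing Implicit Defensive.
Import Order.TTheory GRing.Theory Num.Theory.
Local Open Scope ring_scope.

Section IC.
Variables (R : realFieldType) (V : finType).

Definition live (phi : {set V * V}) : rel V := fun u v => (u, v) \in phi.

Definition Gamma (S : {set V}) (phi : {set V * V}) : {set V} :=
  [set v | [exists s in S, connect (live phi) s v]].

Definition real_prob (E : {set V * V}) (p : V * V -> R) (phi : {set V * V}) : R :=
  \prod_(e in E) (if e \in phi then p e else 1 - p e).

Definition sigma (E : {set V * V}) (p : V * V -> R) (u : V) (S : {set V}) : R :=
  \sum_(phi in powerset E) real_prob E p phi * (u \in Gamma S phi)%:R.

Definition Fu (E : {set V * V}) (p : V * V -> R) (u : V) (y : V -> R) : R :=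
  \sum_(S : {set V})
     ((\prod_(j in S) y j) * (\prod_(j in ~: S) (1 - y j))) * sigma E p u S.
End IC.

(* Directed line on nodes 'I_n.+1 (node k here = node k+1 of the paper),
   with edges (k+1, k). *)
Definition line_edges (n : nat) : {set 'I_n.+1 * 'I_n.+1} :=
  [set e | val e.1 == (val e.2).+1].

(* Main.v *)
Require Import Defs.
From mathcomp Require Import all_boot all_order all_algebra zify ring.
Set Implicit Arguments. Unset Strict Implicit. Unset Printing Implicit Defensive.
Import Order.TTheory GRing.Theory Num.Theory.
Local Open Scope ring_scope.

Section G.
Variables (R : realFieldType) (T : finType).

Lemma sum_powerset_prod (D : {set T}) (f : T -> bool -> R) :
  \sum_(S in powerset D) \prod_(j in D) f j (j \in S)
  = \prod_(j in D) (f j true + f j false).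
Proof.
pose h j b := if j \in D then f j b else (if b then 0 else 1 : R).
transitivity (\prod_j (h j true + h j false)); last first.
  rewrite [RHS]big_mkcond /=; apply: eq_bigr => j _; rewrite /h.
  by case: (j \in D); rewrite ?add0r.
have E := @bigA_distr R 0 1 *%R +%R T (fun i => h i true) (fun i => h i false).
rewrite /= in E; rewrite {}E.
change (\sum_(S in powerset D) \prod_(j in D) f j (j \in S) = \sum_(S : {set T}) \prod_j (if j \in S then h j true else h j false)).
rewrite [RHS](bigID (fun S : {set T} => S \subset D)) /=.
rewrite [X in _ = _ + X]big1 ?addr0; last first.
  move=> S /subsetPn [j jS jD]; rewrite (bigD1 j) //= jS /h (negbTE jD) mul0r //.
rewrite (eq_bigl (fun S : {set T} => S \subset D)); last by move=> S; rewrite powersetE.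
apply: eq_bigr => S SD; rewrite [LHS]big_mkcond /=; apply: eq_bigr => j _.
rewrite /h; case: ifP => jD; first by case: (j \in S).
have -> : (j \in S) = false by apply/negbTE; apply: contraFN jD => /(subsetP SD).
by [].
Qed.

Lemma prod_ind (D : {set T}) (b : T -> bool) :
  \prod_(j in D) ((b j)%:R : R) = ([forall j in D, b j])%:R.
Proof.
case: (boolP [forall j in D, b j]) => H.
  by rewrite big1 // => j jD; rewrite (forall_inP H j jD).
case/forall_inPn: H => j jD /negbTE bj.
by rewrite (bigD1 j) //= bj mul0r.
Qed.

Lemma sum_powerset_ind (D : {set T}) (a : T -> R) (g : T -> bool -> bool) :
  \sum_(S in powerset D) (\prod_(j in D) (if j \in S then a j else 1 - a j))
     * ([forall j in D, g j (j \in S)])%:R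
  = \prod_(j in D) ((g j true)%:R * a j + (g j false)%:R * (1 - a j)).
Proof.
rewrite -(sum_powerset_prod D (fun j b => (g j b)%:R * (if b then a j else 1 - a j))).
apply: eq_bigr => S _; rewrite -prod_ind -big_split /=.
by apply: eq_bigr => j _; rewrite mulrC.
Qed.
End G.

Section Line.
Variables (R : realFieldType) (n : nat).
Local Notation V := 'I_n.+1.
Local Notation E := (line_edges n).

Lemma inE_line (e : V * V) : (e \in E) = ((e.1 : nat) == (e.2 : nat).+1).
Proof. by rewrite inE. Qed.

Lemma line_connect (phi : {set V * V}) (s v : V) : phi \subset E ->
  connect (live phi) s v =
  (v <= s)%N && [forall e in E, (v <= e.2 < s)%N ==> (e \in phi)].
Proof.
move=> sub; apply/idP/idP.
- case/connectP => pth; elim: pth s => [|z pth IH] s /= Hp hv.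
    subst v; rewrite leqnn /=; apply/forall_inP => e _; apply/implyP => /andP[h1 h2].
    exfalso; lia.
  case/andP: Hp => Hsz Hp.
  have hE : (s, z) \in E := subsetP sub _ Hsz.
  rewrite inE_line /= in hE; move/eqP: hE => hsz.
  case/andP: (IH z Hp hv) => h1 /forall_inP h2.
  apply/andP; split; first lia.
  apply/forall_inP => e eE; apply/implyP => /andP [l1 l2].
  case: (ltnP e.2 z) => hz.
    by apply: (implyP (h2 e eE)); rewrite l1 hz.
  move: eE l1 l2 hz; case: e => a b /=; rewrite inE_line /= => /eqP hab l1 l2 hz.
  have eb : b = z by apply: ord_inj => /=; lia.
  have ea : a = s by apply: ord_inj => /=; lia.
  by rewrite ea eb.
- case/andP => hvs /forall_inP H.
  suff key : forall k (s : V), (s : nat) = (v + k)%N ->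
     (forall e, e \in E -> (v <= e.2 < s)%N -> e \in phi) -> connect (live phi) s v.
    apply: (key (s - v)%N s); first by rewrite subnKC.
    by move=> e eE he; apply: (implyP (H e eE)).
  elim=> [|k IH] s' hs' H'.
    have -> : s' = v by apply: ord_inj => /=; lia.
    exact: connect0.
  have hk : (v + k < n.+1)%N by have := ltn_ord s'; lia.
  pose z : V := inord (v + k).
  have hz : (z : nat) = (v + k)%N by rewrite /z inordK.
  apply: (@connect_trans _ _ z).
    apply: connect1; rewrite /live; apply: H'.
      by rewrite inE_line /= hz hs' addnS.
    by rewrite /= hz hs'; lia.
  apply: IH => // e eE /andP [h1 h2]; apply: H' => //; lia.
Qed.

Variable p : V * V -> R.

Definition tS (u : V) (S : {set V}) (m : V) : bool :=
  [&& (u <= m)%N, m \in S & [forall j : V, (u <= j < m)%N ==> (j \notin S)]].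
Definition tE (u : V) (phi : {set V * V}) (m : V) : bool :=
  [forall e in E, (u <= e.2 < m)%N ==> (e \in phi)].

Lemma reach_sum (u : V) (S : {set V}) (phi : {set V * V}) : phi \subset E ->
  ((u \in Gamma S phi)%:R : R) = \sum_m ((tS u S m) && (tE u phi m))%:R.
Proof.
move=> sub.
have key m : tS u S m && tE u phi m -> u \in Gamma S phi.
  move=> /andP [/and3P [h1 h2 h3] h4]; rewrite inE; apply/exists_inP; exists m => //.
  by rewrite line_connect // h1; exact: h4.
have uq m1 m2 : tS u S m1 -> tS u S m2 -> m1 = m2.
  move=> /and3P [a1 b1 /forallP c1] /and3P [a2 b2 /forallP c2]; apply: ord_inj.
  case: (ltngtP m1 m2) => // h.
    by have := c2 m1; rewrite a1 h b1.
  by have := c1 m2; rewrite a2 h b2.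
case: (boolP (u \in Gamma S phi)) => hG.
- rewrite inE in hG; case/exists_inP: hG => s sS.
  rewrite line_connect // => /andP [hus /forall_inP hE].
  pose m := [arg min_(j < s | (j \in S) && (u <= j)%N) (j : nat)].
  have hm : tS u S m && tE u phi m.
    rewrite /m; case: arg_minnP; first by rewrite sS hus.
    move=> j /andP [jS uj] hmin; apply/andP; split.
      rewrite /tS uj jS /=; apply/forallP => k; apply/implyP => /andP [uk kj].
      apply/negP => kS.
      by have := hmin k; rewrite kS uk => /(_ erefl); rewrite leqNgt kj.
    have js : (j <= s)%N by have := hmin s; rewrite sS hus => /(_ erefl).
    apply/forall_inP => e eE; apply/implyP => /andP [h1 h2].
    by apply: (implyP (hE e eE)); rewrite h1 /=; exact: leq_trans h2 js.
  rewrite (bigD1 m) //= hm big1 ?addr0 //.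
  move=> k km; case: (boolP (tS u S k && tE u phi k)) => // /andP [hk _].
  by case/andP: hm => hm _; rewrite (uq k m hk hm) eqxx in km.
- rewrite big1 // => k _; case: (boolP (tS u S k && tE u phi k)) => // hk.
  by rewrite (key k hk) in hG.
Qed.

Definition Pu (u m : V) : R := \prod_(e in E) (if (u <= e.2 < m)%N then p e else 1).

Lemma sigma_line (u : V) (S : {set V}) :
  sigma E p u S = \sum_m (tS u S m)%:R * Pu u m.
Proof.
rewrite /sigma.
transitivity (\sum_(phi in powerset E) \sum_m
     real_prob E p phi * ((tS u S m)%:R * (tE u phi m)%:R)).
  apply: eq_bigr => phi; rewrite powersetE => sub; rewrite reach_sum // mulr_sumr.
  by apply: eq_bigr => m _; rewrite -natrM mulnb.
rewrite exchange_big /=; apply: eq_bigr => m _.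
under eq_bigr do rewrite mulrCA.
rewrite -mulr_sumr; congr (_ * _).
rewrite /real_prob /tE.
etransitivity; first exact: (sum_powerset_ind E p (fun e b => (u <= e.2 < m)%N ==> b)).
apply: eq_bigr => e _ /=; case: ifP => _ /=.
  by rewrite mul1r mul0r addr0.
by rewrite !mul1r addrC subrK.
Qed.

Definition Yp (u : V) (y : V -> R) (m : V) : R :=
  \prod_j (if j == m then y j else if (u <= j < m)%N then 1 - y j else 1).

Lemma Fu_line (u : V) (y : V -> R) :
  Fu E p u y = \sum_(m : V) ((u <= m)%N)%:R * Yp u y m * Pu u m.
Proof.
rewrite /Fu.
under eq_bigr do rewrite sigma_line mulr_sumr.
rewrite exchange_big /=; apply: eq_bigr => m _ /=.
transitivity (\sum_(S : {set V}) Pu u m *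
   ((\prod_(j in S) y j * \prod_(j in ~: S) (1 - y j)) * (tS u S m)%:R)).
  by apply: eq_bigr => S _; ring.
rewrite -mulr_sumr [RHS]mulrC; congr (_ * _).
case: (leqP u m) => hum; last first.
  rewrite big1; last by move=> S _; rewrite /tS leqNgt hum /= mulr0.
  by rewrite /= mulr0n mul0r.
rewrite /= mulr1n mul1r.
pose g (j : V) (b : bool) := if j == m then b else if (u <= j < m)%N then ~~ b else true.
transitivity (\sum_(S in powerset [set: V])
   (\prod_(j in [set: V]) (if j \in S then y j else 1 - y j))
     * ([forall j in [set: V], g j (j \in S)])%:R).
  apply: eq_big => [S|S _]; first by rewrite powersetE subsetT.
  congr (_ * _).
    rewrite [RHS](bigID (fun j => j \in S)) /=; congr (_ * _).
      by apply: eq_big => [j|j hj]; rewrite ?in_setT ?hj.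
    by apply: eq_big => [j|j hj]; rewrite ?in_setT ?in_setC //; rewrite inE in hj; rewrite (negbTE hj).
  congr ((nat_of_bool _)%:R); rewrite /tS hum /=; apply/idP/idP.
    case/andP => mS /forallP H; apply/forall_inP => j _; rewrite /g.
    case: eqP => [-> //|jm]; case: ifP => // hj.
    by have := H j; rewrite hj.
  move/forall_inP => H; apply/andP; split.
    by have := H m (in_setT m); rewrite /g eqxx.
  apply/forallP => j; apply/implyP => hj.
  have := H j (in_setT j); rewrite /g hj.
  have -> // : (j == m) = false.
  by apply/negbTE; apply/eqP => e; subst j; rewrite ltnn andbF in hj.
etransitivity; first exact: (sum_powerset_ind [set: V] y g).
rewrite /Yp; apply: eq_big => [j|j _]; first by rewrite in_setT.
rewrite /g; case: eqP => _ /=; first by rewrite mul1r mul0r addr0.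
case: ifP => _ /=; first by rewrite mul0r add0r mul1r.
by rewrite !mul1r addrC subrK.
Qed.
End Line.


Lemma sum_delta (R : realFieldType) n (i : 'I_n.+1) (c : R) (F : 'I_n.+1 -> R) :
  c * (1 - \sum_m F m) = \sum_m ((m == i)%:R * c - c * F m).
Proof.
rewrite sumrB mulrBr mulr1 mulr_sumr; congr (_ - _).
rewrite (bigD1 i) //= eqxx mul1r big1 ?addr0 // => m /negbTE ->.
by rewrite mul0r.
Qed.

Lemma YpZ (R : realFieldType) n (u m : 'I_n.+1) (y : 'I_n.+1 -> R) :
  y m = 0 -> Yp u y m = 0.
Proof. by move=> h; rewrite /Yp (bigD1 m) //= eqxx h mul0r. Qed.

Lemma Pu_split (R : realFieldType) n p (i m : 'I_n.+1) : (i <= m)%N ->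
  Pu p ord0 m = Pu p ord0 i * Pu (R:=R) p i m.
Proof.
move=> him; rewrite /Pu -big_split /=; apply: eq_bigr => e _.
rewrite /=.
case: (boolP (e.2 < m)%N) => h1; case: (boolP (e.2 < i)%N) => h2;
  case: (boolP (i <= e.2)%N) => h3 /=; rewrite ?mulr1 ?mul1r //; exfalso; lia.
Qed.

Unset Implicit Arguments.
Theorem lemma7 (R : realFieldType) (n : nat)
  (p : 'I_n.+1 * 'I_n.+1 -> R)
  (hp : forall e, e \in line_edges n -> 0 <= p e <= 1)
  (x : 'I_n.+1 -> R) (hx : forall j, 0 <= x j <= 1)
  (i : 'I_n.+1) :
  Fu (line_edges n) p ord0 (fun j => if (j < i)%N then 0 else x j)
  - Fu (line_edges n) p ord0 (fun j => if (j <= i)%N then 0 else x j)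
  = x i * sigma (line_edges n) p ord0 [set i]
    * (1 - Fu (line_edges n) p i (fun j => if (j <= i)%N then 0 else x j)).
Proof.
set y := (fun j : 'I_n.+1 => if (j < i)%N then 0 else x j).
set y' := (fun j : 'I_n.+1 => if (j <= i)%N then 0 else x j).
have hs : sigma (line_edges n) p ord0 [set i] = Pu p ord0 i.
  rewrite sigma_line (bigD1 i) //= big1 ?addr0.
    rewrite /tS in_set1 eqxx leq0n /=.
    have -> : [forall j : 'I_n.+1, (0 <= j < i)%N ==> (j \notin [set i])].
      apply/forallP => j; apply/implyP => /andP[_ h]; rewrite in_set1.
      by apply/eqP => e; subst j; rewrite ltnn in h.
    by rewrite mulr1n mul1r.
  by move=> m hm; rewrite /tS in_set1 (negbTE hm) andbF /= mulr0n mul0r.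
rewrite hs !Fu_line (sum_delta i) -sumrB; apply: eq_bigr => m _.
rewrite leq0n /= mulr1n !mul1r.
have yy j : j != i -> y j = y' j.
  move=> hj; rewrite /y /y'; case: (ltngtP j i) => // e.
  by move: hj; rewrite (ord_inj e) eqxx.
case: (ltngtP m i) => h.
- have mi : (m == i) = false by apply/eqP => e; subst m; rewrite ltnn in h.
  rewrite mi (YpZ _ (y := y)) ?(YpZ _ (y := y')) /y /y' ?h ?(ltnW h) //.
  by rewrite /= mulr0n !mul0r !mulr0 subrr.
- have mi : (m == i) = false by apply/eqP => e; subst m; rewrite ltnn in h.
  have im : (i == m) = false by apply/eqP => e; subst m; rewrite ltnn in h.
  have h1 : Yp ord0 y m = (1 - x i) * Yp ord0 y' m.
    rewrite /Yp (bigD1 i) //= [in RHS](bigD1 i) //= im /= h.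
    rewrite {1}/y {1}/y' ltnn leqnn subr0 mul1r; congr (_ * _).
    by apply: eq_bigr => j hj; rewrite yy.
  have h2 : Yp i y' m = Yp ord0 y' m.
    rewrite /Yp (bigD1 i) //= [in RHS](bigD1 i) //= im /= leqnn h /=.
    congr (_ * _); apply: eq_bigr => j hj; case: eqP => // _.
    rewrite /y'; case: (ltngtP j i) => hji /=.
    - by rewrite (ltn_trans hji h) subr0.
    - by [].
    - by [].
  rewrite mi h2 h1 (Pu_split p (ltnW h)) /= mulr0n mulr1n; ring.
- have e : m = i by apply: ord_inj.
  subst m.
  have h1 : Yp ord0 y i = x i.
    rewrite /Yp (bigD1 i) //= eqxx {1}/y ltnn big1 ?mulr1 // => j hj.
    rewrite (negbTE hj); case: ifP => // hji.
    by rewrite /y hji subr0.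
  rewrite h1 (YpZ _ (y := y')) ?(YpZ i (y := y')) /y' ?leqnn // eqxx /= mulr1n.
  ring.
Qed.
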